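(* Let $\mathcal{H}_C$ be a finite-dimensional complex Hilbert space, let $\Pi_1,\dots,\Pi_m$ be mutually orthogonal orthogonal projections on $\mathcal{H}_C$ with $\sum_j\Pi_j=I$, and for each $k\in\mathbb{R}$ let $U_k$ be a unitary operator on $\mathcal{H}_C$. For $0\le p\le1$, $q=1-p$, define the linear map on $L(\mathcal{H}_C)$ $$\mathcal{L}_{k,k',p}(\rho)=qU_k\rho U_{k'}^*+p\sum_{j=1}^m\Pi_jU_k\rho(\Pi_jU_{k'})^*.$$ Say that a linear map satisfies the eigenvalue condition if $1$ is an eigenvalue of it of algebraic multiplicity $1$ and all its other eigenvalues have absolute value strictly less than $1$. If $\mathcal{L}_{k,k,1}$ satisfies the eigenvalue condition, then $\mathcal{L}_{k,k,p}$ satisfies the eigenvalue condition for every $0<p\le1$.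
   Context: $L(\mathcal{H}_C)$ denotes the space of linear operators on $\mathcal{H}_C$ (with the Hilbert–Schmidt inner product). The case $p=0$ corresponds to the coherent (unitary) quantum random walk and $p=1$ to the fully decoherent (open) quantum random walk. *)

(* Defs.v *)
(* H_C = C^n with C = R[i] = complex R, R : realType (the reals). *)
From HB Require Import structures.
From mathcomp Require Import all_boot all_order all_algebra.
From mathcomp Require Export complex.
From mathcomp Require Import reals.
Set Implicit Arguments. Unset Strict Implicit. Unset Printing Implicit Defensive.
Import Order.TTheory GRing.Theory Num.Theory.
Local Open Scope ring_scope.
Local Open Scope complex_scope.

Definition adjM (R : rcfType) (n : nat) (A : 'M[R[i]]_n) : 'M[R[i]]_n :=
  (map_mx Num.conj A)^T.

Definition unitary_mx (R : rcfType) (n : nat) (U : 'M[R[i]]_n) : Prop :=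
  U *m adjM U = 1%:M /\ adjM U *m U = 1%:M.

Definition orth_proj (R : rcfType) (n : nat) (P : 'M[R[i]]_n) : Prop :=
  adjM P = P /\ P *m P = P.

Definition Lmap (R : rcfType) (n m : nat) (Pi : 'I_m -> 'M[R[i]]_n)
    (Uk Uk' : 'M[R[i]]_n) (p : R) (rho : 'M[R[i]]_n) : 'M[R[i]]_n :=
  ((1 - p)%:C : R[i]) *: (Uk *m rho *m adjM Uk')
  + (p%:C : R[i]) *: \sum_(j < m) (Pi j *m Uk *m rho *m adjM (Pi j *m Uk')).

(* eigenvalue condition for a linear map f on L(H_C) = 'M_n, via its matrix
   lin_mx f : 'M_(n*n): 1 is an eigenvalue of algebraic multiplicity 1
   (multiplicity as a root of the characteristic polynomial), all other
   eigenvalues have modulus < 1. *)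
Definition eigen_cond (R : rcfType) (n : nat) (f : 'M[R[i]]_n -> 'M[R[i]]_n) : Prop :=
  let A := lin_mx f in
  eigenvalue A 1 /\ mup 1 (char_poly A) = 1%N /\
  (forall lam : R[i], eigenvalue A lam -> lam != 1 -> `|lam| < 1).

(* Main.v *)
Require Import Defs.
From HB Require Import structures.
From mathcomp Require Import all_boot all_order all_algebra.
From mathcomp Require Import complex reals.
From mathcomp Require Import mxred sesquilinear spectral ring lra.
Import Order.TTheory GRing.Theory Num.Theory.
Local Open Scope ring_scope.
Set Implicit Arguments. Unset Strict Implicit.

Section HS.
Variable R : rcfType.
Local Notation C := R[i].

Definition adjR a b (X : 'M[C]_(a, b)) : 'M[C]_(b, a) := (map_mx Num.conj X)^T.
Definition hs a b (X Y : 'M[C]_(a, b)) : C := \tr (X *m adjR Y).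

Lemma adjRM a b c (X : 'M[C]_(a, b)) (Y : 'M[C]_(b, c)) :
  adjR (X *m Y) = adjR Y *m adjR X.
Proof. by rewrite /adjR map_mxM trmx_mul. Qed.

Lemma adjRK a b (X : 'M[C]_(a, b)) : adjR (adjR X) = X.
Proof.
rewrite /adjR map_trmx trmxK -map_mx_comp; apply/matrixP => i j.
by rewrite !mxE /= conjCK.
Qed.

Lemma adjRD a b (X Y : 'M[C]_(a, b)) : adjR (X + Y) = adjR X + adjR Y.
Proof. by rewrite /adjR map_mxD linearD. Qed.

Lemma adjRN a b (X : 'M[C]_(a, b)) : adjR (- X) = - adjR X.
Proof. by apply/matrixP => i j; rewrite !mxE rmorphN. Qed.

Lemma adjRZ a b c (X : 'M[C]_(a, b)) : adjR (c *: X) = (Num.conj c) *: adjR X.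
Proof. by rewrite /adjR map_mxZ linearZ. Qed.

Lemma adjR_sum a b I (r : seq I) (P : pred I) (F : I -> 'M[C]_(a, b)) :
  adjR (\sum_(i <- r | P i) F i) = \sum_(i <- r | P i) adjR (F i).
Proof. by apply: (big_morph _ (@adjRD a b)); apply/matrixP => i j; rewrite !mxE rmorph0. Qed.

Lemma adjR1 a : adjR (1%:M : 'M[C]_a) = 1%:M.
Proof. by rewrite /adjR map_mx1 trmx1. Qed.

Lemma hsDl a b (X Y Z : 'M[C]_(a, b)) : hs (X + Y) Z = hs X Z + hs Y Z.
Proof. by rewrite /hs mulmxDl mxtraceD. Qed.
Lemma hsDr a b (X Y Z : 'M[C]_(a, b)) : hs Z (X + Y) = hs Z X + hs Z Y.
Proof. by rewrite /hs adjRD mulmxDr mxtraceD. Qed.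
Lemma hsNl a b (X Z : 'M[C]_(a, b)) : hs (- X) Z = - hs X Z.
Proof. by rewrite /hs mulNmx linearN. Qed.
Lemma hsNr a b (X Z : 'M[C]_(a, b)) : hs Z (- X) = - hs Z X.
Proof. by rewrite /hs adjRN mulmxN linearN. Qed.
Lemma hsZl a b c (X Z : 'M[C]_(a, b)) : hs (c *: X) Z = c * hs X Z.
Proof. by rewrite /hs -scalemxAl mxtraceZ. Qed.
Lemma hsZr a b c (X Z : 'M[C]_(a, b)) : hs Z (c *: X) = Num.conj c * hs Z X.
Proof. by rewrite /hs adjRZ -scalemxAr mxtraceZ. Qed.
Lemma hs_suml a b I (r : seq I) (P : pred I) (F : I -> 'M[C]_(a, b)) Z :
  hs (\sum_(i <- r | P i) F i) Z = \sum_(i <- r | P i) hs (F i) Z.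
Proof.
elim/big_rec2: _ => [|i y1 y2 _ <-]; last by rewrite hsDl.
by rewrite /hs mul0mx mxtrace0.
Qed.
Lemma hs_sumr a b I (r : seq I) (P : pred I) (F : I -> 'M[C]_(a, b)) Z :
  hs Z (\sum_(i <- r | P i) F i) = \sum_(i <- r | P i) hs Z (F i).
Proof.
elim/big_rec2: _ => [|i y1 y2 _ <-]; last by rewrite hsDr.
by rewrite /hs /adjR map_mx0 trmx0 mulmx0 mxtrace0.
Qed.

Lemma hs_mull a b c (A : 'M[C]_(a, b)) (X : 'M[C]_(b, c)) Y :
  hs (A *m X) Y = hs X (adjR A *m Y).
Proof. by rewrite /hs adjRM adjRK -mulmxA mxtrace_mulC mulmxA. Qed.

Lemma hs_mulr a b c (X : 'M[C]_(a, b)) (A : 'M[C]_(b, c)) Y :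
  hs (X *m A) Y = hs X (Y *m adjR A).
Proof. by rewrite /hs adjRM adjRK mulmxA. Qed.

Lemma hsC a b (X Y : 'M[C]_(a, b)) : hs Y X = Num.conj (hs X Y).
Proof.
rewrite /hs; have -> : Y *m adjR X = adjR (X *m adjR Y) by rewrite adjRM adjRK.
rewrite /adjR mxtrace_tr /mxtrace rmorph_sum; apply: eq_bigr => i _; by rewrite mxE.
Qed.

Lemma hs_self a b (X : 'M[C]_(a, b)) :
  hs X X = \sum_i \sum_j `|X i j| ^+ 2.
Proof.
rewrite /hs /mxtrace; apply: eq_bigr => i _; rewrite mxE.
by apply: eq_bigr => j _; rewrite !mxE normCK.
Qed.

Lemma hs_ge0 a b (X : 'M[C]_(a, b)) : 0 <= hs X X.
Proof. by rewrite hs_self sumr_ge0 // => i _; rewrite sumr_ge0 // => j _; rewrite exprn_ge0. Qed.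

Lemma hs_eq0 a b (X : 'M[C]_(a, b)) : hs X X = 0 -> X = 0.
Proof.
rewrite hs_self => H0; apply/matrixP => i j; rewrite mxE.
have H := psumr_eq0P (fun k _ => sumr_ge0 _ (fun l _ => exprn_ge0 2 (normr_ge0 (X k l)))) H0.
have Hi := psumr_eq0P (fun l _ => exprn_ge0 2 (normr_ge0 (X i l))) (H i isT).
have := Hi j isT.
by move/eqP; rewrite expf_eq0 /= normr_eq0 => /eqP.
Qed.
End HS.

Section V.
Variable R : rcfType.
Local Notation C := R[i].

Lemma hs_mxvec m n (X : 'M[C]_(m, n)) : hs (mxvec X) (mxvec X) = hs X X.
Proof.
rewrite !hs_self big_ord1 (reindex _ (curry_mxvec_bij m n)) /= pair_big /=.
by apply: eq_bigr => -[i j] _ /=; rewrite mxvecE.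
Qed.

Lemma hs_vec_mx m n (v : 'rV[C]_(m * n)) : hs (vec_mx v) (vec_mx v) = hs v v.
Proof. by rewrite -hs_mxvec vec_mxK. Qed.

Lemma mul_rV_lin_gen m n (f : 'M[C]_(m, n) -> 'M[C]_(m, n)) (fl : linear f) u :
  u *m lin_mx f = mxvec (f (vec_mx u)).
Proof.
pose F : {linear 'M[C]_(m, n) -> 'M[C]_(m, n)} := HB.pack f (GRing.isLinear.Build _ _ _ _ f fl).
exact: (mul_rV_lin F).
Qed.

Lemma Lmap_linear n m (Pi : 'I_m -> 'M[C]_n) Uk Uk' p : linear (Lmap Pi Uk Uk' p).
Proof.
move=> a X Y; rewrite /Lmap.
have E (A B : 'M[C]_n) : A *m (a *: X + Y) *m B = a *: (A *m X *m B) + A *m Y *m B.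
  by rewrite mulmxDr mulmxDl -scalemxAr -scalemxAl.
rewrite E; under eq_bigr do rewrite E.
rewrite big_split /= -scaler_sumr !scalerDr !scalerA (mulrC a) (mulrC a) -!scalerA.
by rewrite addrACA.
Qed.
End V.

Module P3M.
Local Open Scope complex_scope.


Section K.
Variable R : rcfType.
Local Notation C := R[i].
Variables (n m : nat) (Pi : 'I_m -> 'M[C]_n) (U : 'M[C]_n).
Hypothesis Pproj : forall j, orth_proj (Pi j).
Hypothesis Porth : forall j j', j != j' -> Pi j *m Pi j' = 0.
Hypothesis Psum : \sum_(j < m) Pi j = 1%:M.
Hypothesis Uu : unitary_mx U.

Lemma adjME (A : 'M[C]_n) : adjM A = adjR A. Proof. by []. Qed.
Let PA j : adjR (Pi j) = Pi j := proj1 (Pproj j).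
Let PP j : Pi j *m Pi j = Pi j := proj2 (Pproj j).
Let UU1 : U *m adjR U = 1%:M := proj1 Uu.
Let UU2 : adjR U *m U = 1%:M := proj2 Uu.

Definition DD (Y : 'M[C]_n) := \sum_(j < m) Pi j *m Y *m Pi j.
Definition YY (X : 'M[C]_n) := U *m X *m adjR U.

Lemma conj_real (x : R) : Num.conj (x%:C : C) = x%:C.
Proof. by apply/eqP; rewrite eq_complex /= oppr0 !eqxx. Qed.

Lemma Lmap_eq p X : Lmap Pi U U p X = (1 - p)%:C *: YY X + p%:C *: DD (YY X).
Proof.
rewrite /Lmap /DD /YY; congr (_ + _ *: _); apply: eq_bigr => j _.
by rewrite adjME adjRM PA !mulmxA.
Qed.

Lemma hs_DD Y Z : hs (DD Y) Z = hs Y (DD Z).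
Proof.
rewrite /DD hs_suml hs_sumr; apply: eq_bigr => j _.
by rewrite hs_mulr hs_mull !PA mulmxA.
Qed.

Lemma DD_idem Y : DD (DD Y) = DD Y.
Proof.
rewrite /DD; apply: eq_bigr => j _.
rewrite mulmx_sumr mulmx_suml (bigD1 j) //= big1 ?addr0.
  by rewrite !mulmxA PP -!mulmxA PP.
by move=> k kj; rewrite !mulmxA Porth 1?eq_sym // !mul0mx.
Qed.

Lemma hs_YY X : hs (YY X) (YY X) = hs X X.
Proof.
rewrite /YY hs_mulr hs_mull adjRK -!mulmxA UU2 mulmx1.
by rewrite mulmxA UU2 mul1mx.
Qed.

Lemma Lmap1 X : Lmap Pi U U 1 X = DD (YY X).
Proof. by rewrite Lmap_eq subrr scale0r add0r scale1r. Qed.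

Lemma Lmap_decomp p X :
  Lmap Pi U U p X = DD (YY X) + (1 - p)%:C *: (YY X - DD (YY X)).
Proof.
rewrite Lmap_eq scalerBr.
have -> : p%:C = 1 - (1-p)%:C :> C by rewrite rmorphB rmorph1 opprB addrC subrK.
by rewrite scalerBl scale1r addrCA.
Qed.

Lemma Lmap_key p X :
  hs (Lmap Pi U U p X) (Lmap Pi U U p X)
  + (1 - (1 - p)%:C * (1 - p)%:C) * hs (YY X - DD (YY X)) (YY X - DD (YY X))
  = hs X X.
Proof.
set q := (1 - p)%:C; set Y := YY X; set E := Y - DD Y.
have h1 : hs (DD Y) (DD Y) = hs Y (DD Y) by rewrite hs_DD DD_idem.
have h2 : hs (DD Y) Y = hs Y (DD Y) by rewrite hs_DD.
have e1 : hs (DD Y) E = 0 by rewrite /E hsDr hsNr h1 h2 subrr.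
have e2 : hs E (DD Y) = 0 by rewrite /E hsDl hsNl h1 subrr.
have cq : Num.conj q = q by rewrite conj_real.
rewrite Lmap_decomp -[hs X X]hs_YY -/Y -/E -/q.
have YE : Y = E + DD Y by rewrite /E subrK.
clearbody E Y.
have hY : hs Y Y = hs (DD Y) (DD Y) + hs E E.
  by rewrite {1 2}YE !(hsDl, hsDr) e1 e2 addr0 add0r addrC.
rewrite hY !(hsDl, hsDr, hsZl, hsZr) e1 e2 cq !mulr0 addr0 add0r.
by ring.
Qed.
End K.

Section K2.
Variable R : rcfType.
Local Notation C := R[i].
Variables (n m : nat) (Pi : 'I_m -> 'M[C]_n) (U : 'M[C]_n).
Hypothesis Pproj : forall j, orth_proj (Pi j).
Hypothesis Psum : \sum_(j < m) Pi j = 1%:M.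
Hypothesis Uu : unitary_mx U.

Lemma Lmap_id p : Lmap Pi U U p 1%:M = 1%:M.
Proof.
rewrite /Lmap mulmx1 (proj1 Uu).
have E j : Pi j *m U *m 1%:M *m adjM (Pi j *m U) = Pi j.
  rewrite mulmx1 adjME adjRM mulmxA -(mulmxA _ U) -adjME (proj1 Uu) mulmx1.
  by rewrite -adjME (proj1 (Pproj j)) (proj2 (Pproj j)).
under eq_bigr do rewrite E.
by rewrite Psum -scalerDl rmorphB rmorph1 subrK scale1r.
Qed.
End K2.

End P3M.
Import P3M.

Section Sch.
Variable R : rcfType.
Local Notation C := R[i].

Lemma tstarE a b (M : 'M[C]_(a, b)) : (M ^t* )%sesqui = adjR M.
Proof. by rewrite /adjR map_trmx. Qed.

Lemma unitaryE N (P : 'M[C]_N) : P \is unitarymx ->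
  P *m adjR P = 1%:M /\ adjR P *m P = 1%:M.
Proof.
move=> /unitarymxP; rewrite tstarE => H; split => //; exact: mulmx1C.
Qed.

Lemma char_poly_conj N (A P : 'M[C]_N) : P \in unitmx ->
  char_poly (P *m A *m invmx P) = char_poly A.
Proof.
move=> Pu; rewrite /char_poly /char_poly_mx !map_mxM.
set f := map_mx _.
have fPP : f P *m f (invmx P) = 1%:M by rewrite -map_mxM mulmxV // map_mx1.
have -> : 'X%:M - f P *m f A *m f (invmx P) = f P *m ('X%:M - f A) *m f (invmx P).
  by rewrite mulmxBr mulmxBl mul_mx_scalar -scalemxAl fPP scalemx1.
by rewrite !det_mulmx mulrAC -det_mulmx fPP det1 mul1r.
Qed.


Lemma trig_top N (T : 'M[C]_N) (v : 'rV[C]_N) : is_trig_mx T -> v *m T = v -> v != 0 ->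
  exists i, [/\ v 0 i != 0, T i i = 1 & forall k : 'I_N, (i < k)%N -> v 0 k = 0].
Proof.
move=> /is_trig_mxP Ttr vT v0.
have [i0 vi0] : exists i, v 0 i != 0.
  case: (pickP (fun i => v 0 i != 0)) => [i0 Hi0|H]; first by exists i0.
  by case/eqP: v0; apply/rowP => i; rewrite mxE; move/negbFE: (H i) => /eqP.
case: (@arg_maxnP _ i0 (fun i => v 0 i != 0) (fun i : 'I_N => i : nat) vi0) => i vi imax.
have vk (k : 'I_N) : (i < k)%N -> v 0 k = 0.
  move=> ik; apply/eqP; apply: contraTT ik => vk; rewrite -leqNgt; exact: imax.
exists i; split => //.
have := congr1 (fun w : 'rV_N => w 0 i) vT; rewrite /= mxE (bigD1 i) //= big1 ?addr0.
  by move=> H; apply: (mulfI vi); rewrite mulr1.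
move=> k ki; case: (ltngtP k i) => [lt|gt|eq].
- by rewrite Ttr // mulr0.
- by rewrite vk // mul0r.
- by move: ki; rewrite -(inj_eq val_inj) /= eq eqxx.
Qed.

Lemma trig_two N (T : 'M[C]_N) (v w : 'rV[C]_N) : is_trig_mx T -> v *m T = v -> w *m T = w ->
  v != 0 -> (forall c, w != c *: v) ->
  exists i j, [/\ i != j, T i i = 1 & T j j = 1].
Proof.
move=> Ttr vT wT v0 H.
have w0 : w != 0 by move: (H 0); rewrite scale0r.
have [i [vi Tii _]] := trig_top Ttr vT v0.
have [j [wj Tjj _]] := trig_top Ttr wT w0.
case: (eqVneq i j) => [eij|neq]; last by exists i, j.
subst j.
set c := w 0 i / v 0 i; set w' := w - c *: v.
have w'T : w' *m T = w' by rewrite mulmxBl -scalemxAl vT wT.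
have w'0 : w' != 0 by rewrite subr_eq0; apply: H.
have [j [w'j Tjj' _]] := trig_top Ttr w'T w'0.
exists i, j; split => //; apply/eqP => eij; move: w'j; rewrite -eij.
by rewrite !mxE /c divfK // subrr eqxx.
Qed.

Lemma mup_trig N (T : 'M[C]_N) : is_trig_mx T ->
  mup 1 (char_poly T) = count (fun i => T i i == 1) (index_enum 'I_N).
Proof.
move=> Ttr; rewrite char_poly_trig //.
rewrite -(big_map (fun i => T i i) xpredT (fun y => 'X - y%:P)) mu_prod_XsubC.
by rewrite count_map; apply: eq_count => i /=; rewrite eq_sym.
Qed.

Lemma count_two N (a : pred 'I_N) : (2 <= count a (index_enum 'I_N))%N ->
  exists i j, [/\ i != j, a i & a j].
Proof.
move=> c2.
have : has a (index_enum 'I_N) by rewrite has_count (leq_trans _ c2).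
case/hasP => i _ ai.
case: (boolP [exists j, (j != i) && a j]) => [/existsP[j /andP[ji aj]]|/existsPn H].
  by exists j, i.
have : (count a (index_enum 'I_N) <= count (pred1 i) (index_enum 'I_N))%N.
  apply: sub_count => j aj /=; apply/eqP; apply: contraNeq (H j) => ji.
  by rewrite ji.
rewrite count_uniq_mem ?index_enum_uniq // mem_index_enum => c1.
by move: (leq_trans c2 c1).
Qed.


Lemma row_fix N (T : 'M[C]_N) k : (forall u : 'rV_N, hs (u *m T) (u *m T) <= hs u u) ->
  T k k = 1 -> delta_mx (0 : 'I_1) k *m T = delta_mx (0 : 'I_1) k.
Proof.
move=> Tc Tkk.
have := Tc (delta_mx (0 : 'I_1) k); rewrite -rowE !hs_self !big_ord1.
have -> : \sum_j `|delta_mx (0 : 'I_1) k 0 j| ^+ 2 = 1 :> C.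
  rewrite (bigD1 k) //= big1 ?mxE ?eqxx ?normr1 ?expr1n ?addr0 //.
  by move=> j jk; rewrite mxE eqxx /= (negbTE jk) normr0 expr0n.
rewrite (bigD1 k) //= -[X in _ <= X]addr0.
rewrite !mxE Tkk normr1 expr1n lerD2l => S0.
have S1 : \sum_(j | j != k) `|row k T 0 j| ^+ 2 = 0.
  by apply/le_anti; rewrite S0 sumr_ge0 // => j _; rewrite exprn_ge0.
have := psumr_eq0P (fun j _ => exprn_ge0 2 (normr_ge0 (row k T 0 j))) S1 => S2.
apply/rowP => j; rewrite !mxE eqxx /=; case: (eqVneq k j) => [<-|kj].
  by rewrite Tkk.
have /eqP := S2 j ltac:(by rewrite eq_sym).
by rewrite expf_eq0 /= normr_eq0 mxE => /eqP.
Qed.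

Lemma hs_unit_r a N (X : 'M[C]_(a, N)) (P : 'M[C]_N) : P *m adjR P = 1%:M ->
  hs (X *m P) (X *m P) = hs X X.
Proof. by move=> PP; rewrite hs_mulr -mulmxA PP mulmx1. Qed.

Lemma geom2_alg2 N (B : 'M[C]_N) (v w : 'rV[C]_N) : v *m B = v -> w *m B = w -> v != 0 ->
  (forall c, w != c *: v) -> (2 <= mup 1 (char_poly B))%N.
Proof.
case: N B v w => [|N] B v w vB wB v0 H.
  by case/eqP: v0; apply/rowP => -[].
have [P Pu Ptr] := Schur B (ltn0Sn N).
have [PP1 PP2] := unitaryE Pu.
have Punit : P \in unitmx := unitarymx_unit Pu.
move: Ptr; rewrite /similar_to (conjumx _ Punit) => Ttr.
set T := P *m B *m invmx P in Ttr.
have iP : invmx P = adjR P by rewrite -tstarE invmx_unitary.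
have fx (x : 'rV_N.+1) : x *m B = x -> (x *m adjR P) *m T = x *m adjR P.
  by move=> xB; rewrite /T iP !mulmxA -(mulmxA x) PP2 mulmx1 xB.
have [||i [j [ij Ti Tj]]] := trig_two Ttr (fx _ vB) (fx _ wB).
- by apply: contraNneq v0 => h; rewrite -[v]mulmx1 -PP2 mulmxA h mul0mx.
- move=> c; apply: contraNneq (H c) => h.
  by rewrite -[w]mulmx1 -PP2 mulmxA h -scalemxAl -mulmxA PP2 mulmx1.
rewrite -(char_poly_conj B Punit) -/T mup_trig // -sum1_count.
rewrite (bigD1 i) /= ?Ti ?eqxx // (bigD1 j) /= ?Tj ?eqxx 1?eq_sym //.
Qed.

Lemma alg2_geom2 N (A : 'M[C]_N) : (forall u : 'rV_N, hs (u *m A) (u *m A) <= hs u u) ->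
  (2 <= mup 1 (char_poly A))%N ->
  exists v w : 'rV[C]_N, [/\ v *m A = v, w *m A = w, v != 0 & forall c, w != c *: v].
Proof.
case: N A => [|N] A contr.
  by rewrite /char_poly det_mx00 mupNroot // root1.
move=> m2.
have [P Pu Ptr] := Schur A (ltn0Sn N).
have [PP1 PP2] := unitaryE Pu.
have Punit : P \in unitmx := unitarymx_unit Pu.
move: Ptr; rewrite /similar_to (conjumx _ Punit) => Ttr.
set T := P *m A *m invmx P in Ttr.
have iP : invmx P = adjR P by rewrite -tstarE invmx_unitary.
rewrite -(char_poly_conj A Punit) -/T mup_trig // in m2.
have [i [j [ij /eqP Ti /eqP Tj]]] := count_two m2.
have PP3 : adjR P *m adjR (adjR P) = 1%:M by rewrite adjRK.
have Tc (u : 'rV_N.+1) : hs (u *m T) (u *m T) <= hs u u.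
  rewrite /T iP !mulmxA hs_unit_r //.
  by rewrite -mulmxA -[hs u u](hs_unit_r u PP1) mulmxA contr.
have TP : T *m P = P *m A by rewrite /T iP -mulmxA PP2 mulmx1.
have fx k : T k k = 1 -> (delta_mx (0 : 'I_1) k *m P) *m A = delta_mx (0 : 'I_1) k *m P.
  by move=> Tk; rewrite -mulmxA -TP mulmxA row_fix.
have back (x : 'rV_N.+1) : x *m P *m adjR P = x by rewrite -mulmxA PP1 mulmx1.
exists (delta_mx (0 : 'I_1) i *m P), (delta_mx (0 : 'I_1) j *m P); split; [exact: fx|exact: fx| |].
  apply/eqP => h; have := back (delta_mx (0 : 'I_1) i); rewrite h mul0mx => /rowP/(_ i).
  by rewrite !mxE !eqxx /= => /eqP; rewrite eq_sym oner_eq0.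
move=> c; apply/eqP => h; have := back (delta_mx (0 : 'I_1) j).
rewrite h -scalemxAl back => /rowP/(_ j); rewrite !mxE !eqxx /=. rewrite eq_sym (negbTE ij) mulr0.
by move=> /eqP; rewrite eq_sym oner_eq0.
Qed.

End Sch.

Unset Implicit Arguments. Set Strict Implicit.

Theorem mainTheorem6 (R : realType) (n m : nat) (Pi : 'I_m -> 'M[R[i]]_n)
    (U : R -> 'M[R[i]]_n) (k : R) :
  (forall j, orth_proj (Pi j)) ->
  (forall j j', j != j' -> Pi j *m Pi j' = 0) ->
  \sum_(j < m) Pi j = 1%:M ->
  (forall k0 : R, unitary_mx (U k0)) ->
  eigen_cond (Lmap Pi (U k) (U k) 1) ->
  forall p : R, 0 < p -> p <= 1 -> eigen_cond (Lmap Pi (U k) (U k) p).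
Proof.
move=> Pproj Porth Psum Uu [ev1 [mup1 lt1]] p p0 p1.
have Uk := Uu k; set U0 := U k in Uk *.
set Lp := Lmap Pi U0 U0 p; set L1 := Lmap Pi U0 U0 1.
have mulA v : v *m lin_mx Lp = mxvec (Lp (vec_mx v)) := mul_rV_lin_gen (Lmap_linear _ _ _ _) v.
have mulB v : v *m lin_mx L1 = mxvec (L1 (vec_mx v)) := mul_rV_lin_gen (Lmap_linear _ _ _ _) v.
set c : R[i] := 1 - ((1 - p)%:C * (1 - p)%:C)%C.
have c0 : 0 < c.
  have -> : c = (1 - (1 - p) * (1 - p))%:C%C by rewrite /c [RHS]rmorphB [in RHS]rmorphM rmorph1.
  by rewrite ltcR; nra.
pose E X := YY U0 X - DD Pi (YY U0 X).
have key X : hs (Lp X) (Lp X) + c * hs (E X) (E X) = hs X X.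
  exact: (Lmap_key Pproj Porth Uk).
have LpL1 X : hs (E X) (E X) = 0 -> Lp X = L1 X.
  move=> /hs_eq0 E0; rewrite /Lp /L1 (Lmap_decomp _ Pproj) -/(E X) E0 scaler0 addr0.
  by rewrite (Lmap1 _ Pproj).
have fixcore X lam : Lp X = lam *: X -> 1 <= `|lam| -> L1 X = lam *: X.
  move=> LX ge1; rewrite -LX; apply/esym/LpL1.
  have := key X; rewrite LX hsZl hsZr mulrA -normCK => K.
  have h0 := hs_ge0 X; have e0 := hs_ge0 (E X).
  have ce : c * hs (E X) (E X) = (1 - `|lam| ^+ 2) * hs X X.
    by rewrite [RHS]mulrBl mul1r -[X in X - _]K addrC addKr.
  have cle : c * hs (E X) (E X) <= 0.
    by rewrite ce mulr_le0_ge0 // subr_le0 exprn_ege1.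
  have : c * hs (E X) (E X) = 0 by apply/le_anti; rewrite cle mulr_ge0 // ltW.
  by move/eqP; rewrite mulf_eq0 (gt_eqF c0) /= => /eqP.
have n0 : (0 < n)%N.
  move/eigenvalueP: ev1 => [v _ v0]; case: (posnP n) => // n0.
  case/negP: v0; apply/eqP/rowP => i; exfalso.
  by have := ltn_ord i; move: (nat_of_ord i) => j; rewrite n0.
have id1 : (1%:M : 'M[R[i]]_n) != 0.
  apply/eqP => /matrixP/(_ (Ordinal n0) (Ordinal n0)); rewrite !mxE eqxx.
  by move/eqP; rewrite oner_eq0.
have evp : eigenvalue (lin_mx Lp) 1.
  apply/eigenvalueP; exists (mxvec 1%:M); last by rewrite mxvec_eq0.
  by rewrite mulA mxvecK /Lp (Lmap_id Pproj Psum Uk) scale1r.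
split; first exact: evp. split.
  have cpA : char_poly (lin_mx Lp) != 0 := monic_neq0 (char_poly_monic _).
  have pos : (0 < mup 1 (char_poly (lin_mx Lp)))%N.
    by rewrite -XsubC_dvd // dvdp_XsubCl -eigenvalue_root_char.
  apply/eqP; rewrite eqn_leq pos andbT leqNgt; apply/negP => m2.
  have contr (u : 'rV_(n * n)) : hs (u *m lin_mx Lp) (u *m lin_mx Lp) <= hs u u.
    rewrite mulA hs_mxvec -hs_vec_mx -(key (vec_mx u)) lerDl.
    by rewrite mulr_ge0 ?hs_ge0 // ltW.
  have [v [w [vA wA v0 H]]] := alg2_geom2 contr m2.
  have fixB (x : 'rV_(n * n)) : x *m lin_mx Lp = x -> x *m lin_mx L1 = x.
    move=> xA; have h : Lp (vec_mx x) = vec_mx x.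
      by move: xA; rewrite mulA => /(congr1 vec_mx); rewrite mxvecK.
    rewrite mulB; have := fixcore (vec_mx x) 1; rewrite scale1r => /(_ h).
    by rewrite normr1 => /(_ (lexx _)) ->; rewrite vec_mxK.
  have := geom2_alg2 (fixB _ vA) (fixB _ wA) v0 H.
  by rewrite mup1.
move=> lam /eigenvalueP [v vA v0] lam1.
case: (boolP (`|lam| < 1)) => // nlt.
have ge1 : 1 <= `|lam| by rewrite real_leNgt ?normr_real ?real1.
have LX : Lp (vec_mx v) = lam *: vec_mx v.
  by move: vA; rewrite mulA => /(congr1 vec_mx); rewrite mxvecK linearZ.
case/negP: nlt; apply: (lt1 lam _ lam1); apply/eigenvalueP; exists v; last exact: v0.
by rewrite mulB (fixcore _ _ LX ge1) linearZ /= vec_mxK.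
Qed.
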